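(* Consider the composite problem and the Stochastic Decoupling Method described in the context, with $f=\frac1n\sum_{i=1}^nf_i$ where each $f_i$ is convex and $L$-smooth, $f$ $\mu$-strongly convex with $\mu>0$, $R$ proper closed convex, each $g_j:\mathbb{R}^d\to\mathbb{R}$ convex and $L_g$-smooth (the same $L_g$ for all $j$), and uniform probabilities $p_1=\dots=p_m=\frac1m$. Let $v^t$ be produced by SVRG or SAGA without minibatching, and suppose this estimator satisfies part (b) of the gradient-estimator condition with $\eta_0=\frac1{5L}$, $\rho=\frac1n$ and a constant $\omega>0$. Define $\eta_{best}:=(\omega\mu mL_g)^{-1/2}$ and set $\eta=\min\{\eta_0,\eta_{best}\}$. Then the number of iterations needed to guarantee $\mathbb{E}\|x^t-x^*\|^2\le\varepsilon$ is $$\mathcal O\left(\left(n+m+\frac L\mu+\sqrt{\frac{mL_g}{\mu}}\right)\log\frac1\varepsilon\right).$$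
   Context: Problem: $\min_{x\in\mathbb{R}^d}f(x)+\frac1m\sum_{j=1}^mg_j(x)+R(x)$, minimizer set nonempty. $L$-smoothness: $h(x)\le h(y)+\langle\nabla h(y),x-y\rangle+\frac L2\|x-y\|^2$; $\mu$-strong convexity: $f(x)\ge f(y)+\langle\nabla f(y),x-y\rangle+\frac\mu2\|x-y\|^2$. $\mathrm{prox}_{\eta h}(x):=\arg\min_u\{h(u)+\frac1{2\eta}\|u-x\|^2\}$. Standing optimality assumption: there exist a minimizer $x^*$, $y_j^*\in\partial g_j(x^* )$, $r^*\in\partial R(x^* )$ with $\nabla f(x^* )+\frac1m\sum_jy_j^*+r^*=0$; fixed. Stochastic Decoupling Method: stepsize $\eta>0$, probabilities $p_j$, $\eta_j:=\eta/(mp_j)$; deterministic start $x^0,y_1^0,\dots,y_m^0$, $y^0:=\frac1m\sum_jy_j^0$. For $t=0,1,\dots$: $v^t$ produced by a gradient estimator; $z^t=\mathrm{prox}_{\eta R}(x^t-\eta v^t-\eta y^t)$; draw $j$ with $\Pr(j=k)=p_k$ independently of the past; $x^{t+1}=\mathrm{prox}_{\eta_jg_j}(z^t+\eta_jy_j^t)$; $y_j^{t+1}=y_j^t+\frac1{\eta_j}(z^t-x^{t+1})$, $y_k^{t+1}=y_k^t$ ($k\ne j$); $y^{t+1}=y^t+\frac1m(y_j^{t+1}-y_j^t)$. SAGA/SVRG estimators (no minibatching): points $u_1^t,\dots,u_n^t$ are stored; an index $i$ is drawn uniformly from $\{1,\dots,n\}$ and $v^t=\nabla f_i(x^t)-\nabla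 f_i(u_i^t)+\frac1n\sum_{k=1}^n\nabla f_k(u_k^t)$. In SAGA, $u_i^{t+1}=x^t$ for the sampled $i$ and $u_k^{t+1}=u_k^t$ otherwise; in SVRG all $u_k^t$ equal a common reference point which is periodically reset to the current iterate. Gradient-estimator condition part (b): with $w^t:=x^t-\eta v^t$, $w^*:=x^*-\eta\nabla f(x^* )$, there are $\eta_0>0$, $\omega>0$ and nonnegative $\{\mathcal M^t\}$ such that for every $\eta\le\eta_0$ and all $t$: either $\mathcal M^t\equiv0$, or $\mathbb{E}\|w^t-w^*\|^2+\mathcal M^{t+1}\le(1-\omega\eta\mu)\mathbb{E}\|x^t-x^*\|^2+(1-\rho)\mathcal M^t$. *)

(* Defs.v *)
From HB Require Import structures.
From mathcomp Require Import all_boot all_order all_algebra.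
From mathcomp Require Import all_classical all_reals all_analysis.
Import Order.TTheory GRing.Theory Num.Theory.
Import numFieldNormedType.Exports.

Set Implicit Arguments.
Unset Strict Implicit.
Unset Printing Implicit Defensive.

Local Open Scope ring_scope.
Local Open Scope classical_set_scope.

Definition dotv {R : realType} {d : nat} (u v : 'rV[R]_d) : R :=
  \sum_(k < d) u 0 k * v 0 k.

Definition sqnorm {R : realType} {d : nat} (u : 'rV[R]_d) : R := dotv u u.

Definition grad {R : realType} {d : nat} (h : 'rV[R]_d -> R) (x : 'rV[R]_d)
  : 'rV[R]_d := \row_(k < d) ('d h x (delta_mx 0 k : 'rV[R]_d)).

Definition convex_fun {R : realType} {d : nat} (h : 'rV[R]_d -> R) : Prop :=
  forall (x y : 'rV[R]_d) (l : R), 0 <= l <= 1 ->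
    h (l *: x + (1 - l) *: y) <= l * h x + (1 - l) * h y.

Definition smooth {R : realType} {d : nat} (L : R) (h : 'rV[R]_d -> R) : Prop :=
  (forall x, differentiable h x) /\
  forall x y : 'rV[R]_d,
    h x <= h y + dotv (grad h y) (x - y) + L / 2 * sqnorm (x - y).

Definition strongly_convex {R : realType} {d : nat} (mu : R)
  (h : 'rV[R]_d -> R) : Prop :=
  (forall x, differentiable h x) /\
  forall x y : 'rV[R]_d,
    h y + dotv (grad h y) (x - y) + mu / 2 * sqnorm (x - y) <= h x.

Definition proper_fun {R : realType} {d : nat} (h : 'rV[R]_d -> \bar R) : Prop :=
  (forall x, h x != -oo%E) /\ (exists x, h x != +oo%E).

Definition closed_fun {R : realType} {d : nat} (h : 'rV[R]_d -> \bar R) : Prop :=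
  closed [set p : 'rV[R]_d * R | (h p.1 <= p.2%:E)%E].

Definition convex_efun {R : realType} {d : nat} (h : 'rV[R]_d -> \bar R) : Prop :=
  forall (x y : 'rV[R]_d) (l : R), 0 <= l <= 1 ->
    (h x < +oo)%E -> (h y < +oo)%E ->
    (h (l *: x + (1 - l) *: y)%R <= l%:E * h x + (1 - l)%:E * h y)%E.

Definition subgrad {R : realType} {d : nat} (h : 'rV[R]_d -> R) (x s : 'rV[R]_d)
  : Prop := forall u, h x + dotv s (u - x) <= h u.

Definition esubgrad {R : realType} {d : nat} (h : 'rV[R]_d -> \bar R)
  (x s : 'rV[R]_d) : Prop :=
  forall u, (h x + (dotv s (u - x))%:E <= h u)%E.

(** It is defined by (classical) choice of a minimizer; under the paper's
    hypotheses the minimizer exists and is unique. *)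
Definition prox {R : realType} {d : nat} (h : 'rV[R]_d -> \bar R) (eta : R)
  (x : 'rV[R]_d) : 'rV[R]_d :=
  get [set u | forall v : 'rV[R]_d,
         (h u + ((2 * eta)^-1 * sqnorm (u - x))%:E
          <= h v + ((2 * eta)^-1 * sqnorm (v - x))%:E)%E].

(** Gradient estimators (no minibatching). SVRG T: the common reference
    point is reset to the current iterate every T iterations. *)
Inductive estimator := SAGA | SVRG of nat.

Record sdm_state (R : realType) (d n m : nat) := SDMState {
  st_x : 'rV[R]_d;
  st_y : 'I_m -> 'rV[R]_d;
  st_ybar : 'rV[R]_d;
  st_u : 'I_n -> 'rV[R]_d
}.

Section SDM.
Context {R : realType} {d n m : nat}.
Context (fs : 'I_n -> 'rV[R]_d -> R) (gs : 'I_m -> 'rV[R]_d -> R)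
        (Rf : 'rV[R]_d -> \bar R) (eta : R) (p : 'I_m -> R) (est : estimator).

Definition sdm_v (s : sdm_state R d n m) (i : 'I_n) : 'rV[R]_d :=
  grad (fs i) (st_x s) - grad (fs i) (st_u s i)
  + n%:R^-1 *: \sum_(k < n) grad (fs k) (st_u s k).

Definition sdm_step (t : nat) (s : sdm_state R d n m) (ij : 'I_n * 'I_m)
  : sdm_state R d n m :=
  let i := ij.1 in let j := ij.2 in
  let x := st_x s in
  let v := sdm_v s i in
  let z := prox Rf eta (x - eta *: v - eta *: st_ybar s) in
  let eta_j := eta / (m%:R * p j) in
  let x' := prox (fun u => (gs j u)%:E) eta_j (z + eta_j *: st_y s j) in
  let yj' := st_y s j + eta_j^-1 *: (z - x') in
  let y' := fun k => if k == j then yj' else st_y s k in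
  let ybar' := st_ybar s + m%:R^-1 *: (yj' - st_y s j) in
  let u' := match est with
            | SAGA => fun k => if k == i then x else st_u s k
            | SVRG T => if (T %| t.+1)%N then (fun _ => x') else st_u s
            end in
  SDMState x' y' ybar' u'.

Fixpoint sdm_run (t0 : nat) (s : sdm_state R d n m) (h : seq ('I_n * 'I_m))
  : sdm_state R d n m :=
  match h with
  | [::] => s
  | ij :: h' => sdm_run t0.+1 (sdm_step t0 s ij) h'
  end.

(** Expectation of a function of the first t sampled pairs: i is uniform on
    {1..n}, j has law p, all draws independent. *)
Definition sdm_expect (t : nat) (F : seq ('I_n * 'I_m) -> R) : R :=
  \sum_(h : t.-tuple ('I_n * 'I_m))
     (\prod_(ij <- h) (n%:R^-1 * p ij.2)) * F h.

Definition sdm_Ex (s0 : sdm_state R d n m) (xs : 'rV[R]_d) (t : nat) : R :=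
  sdm_expect t (fun h => sqnorm (st_x (sdm_run 0 s0 h) - xs)).

Definition sdm_Ew (s0 : sdm_state R d n m) (xs : 'rV[R]_d) (t : nat) : R :=
  sdm_expect t (fun h =>
    let s := sdm_run 0 s0 h in
    \sum_(i < n) n%:R^-1 *
      sqnorm ((st_x s - eta *: sdm_v s i)
              - (xs - eta *: grad (fun x => n%:R^-1 * \sum_(k < n) fs k x) xs))).

End SDM.

(* Main.v *)
Require Import Defs.
From HB Require Import structures.
From mathcomp Require Import all_boot all_order all_algebra.
From mathcomp Require Import all_classical all_reals all_analysis.
From mathcomp Require Import ring lra.
Import Order.TTheory GRing.Theory Num.Theory.
Import numFieldNormedType.Exports.
Local Open Scope ring_scope.
Local Open Scope classical_set_scope.
Section Vec.
Context {R : realType} {d : nat}.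
Implicit Types (u v w : 'rV[R]_d) (a b : R).

Lemma dotvC u v : dotv u v = dotv v u.
Proof. by apply: eq_bigr => k _; rewrite mulrC. Qed.

Lemma dotvDl u v w : dotv (u + v) w = dotv u w + dotv v w.
Proof. by rewrite /dotv -big_split; apply: eq_bigr => k _; rewrite mxE mulrDl. Qed.

Lemma dotvDr u v w : dotv w (u + v) = dotv w u + dotv w v.
Proof. by rewrite !(dotvC w) dotvDl. Qed.

Lemma dotvZl a u v : dotv (a *: u) v = a * dotv u v.
Proof. by rewrite /dotv mulr_sumr; apply: eq_bigr => k _; rewrite mxE mulrA. Qed.

Lemma dotvZr a u v : dotv v (a *: u) = a * dotv v u.
Proof. by rewrite !(dotvC v) dotvZl. Qed.

Lemma dotvNl u v : dotv (- u) v = - dotv u v.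
Proof. by rewrite -scaleN1r dotvZl mulN1r. Qed.

Lemma dotvNr u v : dotv v (- u) = - dotv v u.
Proof. by rewrite !(dotvC v) dotvNl. Qed.

Lemma dotvBl u v w : dotv (u - v) w = dotv u w - dotv v w.
Proof. by rewrite dotvDl dotvNl. Qed.

Lemma dotvBr u v w : dotv w (u - v) = dotv w u - dotv w v.
Proof. by rewrite dotvDr dotvNr. Qed.

Lemma dotv0l v : dotv 0 v = 0.
Proof. by rewrite /dotv big1 // => k _; rewrite mxE mul0r. Qed.

Lemma sqnorm_ge0 u : 0 <= sqnorm u.
Proof. by apply: sumr_ge0 => k _; rewrite -expr2 sqr_ge0. Qed.

Lemma sqnormD u v : sqnorm (u + v) = sqnorm u + 2 * dotv u v + sqnorm v.
Proof. rewrite /sqnorm dotvDl !dotvDr (dotvC v u); lra. Qed.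

Lemma sqnormB u v : sqnorm (u - v) = sqnorm u - 2 * dotv u v + sqnorm v.
Proof. rewrite /sqnorm dotvDl !dotvDr !dotvNl !dotvNr (dotvC v u); lra. Qed.

Lemma sqnormZ a u : sqnorm (a *: u) = a ^+ 2 * sqnorm u.
Proof. by rewrite /sqnorm dotvZl dotvZr mulrA expr2. Qed.

Lemma sqnormN u : sqnorm (- u) = sqnorm u.
Proof. by rewrite /sqnorm dotvNl dotvNr opprK. Qed.

Lemma sqnorm_eq0 u : sqnorm u = 0 -> u = 0.
Proof.
move=> /eqP; rewrite /sqnorm /dotv psumr_eq0; last by move=> k _; rewrite -expr2 sqr_ge0.
move=> /allP H; apply/rowP => k; rewrite mxE.
have := H k (mem_index_enum k); rewrite /= -expr2 sqrf_eq0.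
by move=> /eqP.
Qed.

Lemma young u v : 2 * dotv u v <= sqnorm u + sqnorm v.
Proof. have := sqnorm_ge0 (u - v); rewrite sqnormB; lra. Qed.

Lemma coord_le u k : `|u 0 k| <= 1 + sqnorm u.
Proof.
have h1 : `|u 0 k| <= 1 + u 0 k ^+ 2.
  rewrite -real_normK ?num_real //; have := sqr_ge0 (`|u 0 k| - 1); rewrite sqrrB expr1n mulr1; set q := _ ^+ 2; move=> H; have : 0 <= q by rewrite /q sqr_ge0. lra.
apply: (le_trans h1); rewrite lerD2l /sqnorm /dotv (bigD1 k) //= -expr2 lerDl.
by apply: sumr_ge0 => i _; rewrite -expr2 sqr_ge0.
Qed.

End Vec.
Section Smooth.
Context {R : realType} {d : nat}.
Implicit Types (u v w x y s : 'rV[R]_d).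

Lemma subgrad_grad {L : R} {g : 'rV[R]_d -> R} {x s} :
  0 < L -> smooth L g -> subgrad g x s -> s = grad g x.
Proof.
move=> L0 [_ sm] sg.
set D := s - grad g x.
have := sm (x + L^-1 *: D) x; have := sg (x + L^-1 *: D).
rewrite [x + _]addrC addrK dotvZr dotvZr sqnormZ.
have -> : dotv s D = dotv D D + dotv (grad g x) D.
  by rewrite /D dotvBl; lra.
set N := dotv D D; have N0 : 0 <= N by apply: sqnorm_ge0.
set k := L^-1; have k0 : 0 < k by rewrite invr_gt0.
have Lk : L * k = 1 by rewrite mulfV // gt_eqF.
have e : L / 2 * (k ^+ 2 * sqnorm D) = k / 2 * N.
  rewrite /N -/(sqnorm D) /k; field; exact: lt0r_neq0.
rewrite e => h1 h2.
have : k * N <= k / 2 * N by lra.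
move=> h3; have : N <= 0 by nra.
move=> h4; have : sqnorm D = 0 by rewrite /sqnorm -/N; lra.
by move/sqnorm_eq0/eqP; rewrite subr_eq0 => /eqP.
Qed.

Lemma smooth_half {L : R} {g : 'rV[R]_d -> R} {x y s s'} :
  0 < L -> smooth L g -> subgrad g x s -> subgrad g y s' ->
  g x + dotv s (y - x) + (2 * L)^-1 * sqnorm (s' - s) <= g y.
Proof.
move=> L0 hs sgx sgy.
have e' := subgrad_grad L0 hs sgy.
case: hs => _ sm.
set D := s' - s.
set u := y - L^-1 *: D.
have h1 := sgx u; have h2 := sm u y; rewrite -e' in h2.
have eu : u - y = - (L^-1 *: D) by rewrite /u addrAC subrr add0r.
have eux : u - x = (y - x) + (u - y) by rewrite [RHS]addrC addrA subrK.
rewrite eux dotvDr eu !dotvNr !dotvZr sqnormN sqnormZ in h1 h2 *.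
set N := sqnorm D; have N0 : 0 <= N by apply: sqnorm_ge0.
set k := L^-1; have k0 : 0 < k by rewrite invr_gt0.
have Lk : L * k = 1 by rewrite mulfV // gt_eqF.
have e : L / 2 * (k ^+ 2 * N) = k / 2 * N.
  rewrite /k; field; exact: lt0r_neq0.
have e2 : (2 * L)^-1 = k / 2 by rewrite invfM mulrC.
rewrite e2; rewrite e in h2.
move: h1 h2; rewrite -/(sqnorm D) -/N.
have -> : dotv s' D = N + dotv s D by rewrite /N /sqnorm /D dotvBl; lra.
nra.
Qed.

Lemma cocoercive {L : R} {g : 'rV[R]_d -> R} {x y s s'} :
  0 < L -> smooth L g -> subgrad g x s -> subgrad g y s' ->
  sqnorm (s - s') <= L * dotv (s - s') (x - y).
Proof.
move=> L0 hs sgx sgy.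
have h1 := smooth_half L0 hs sgx sgy.
have h2 := smooth_half L0 hs sgy sgx.
have e1 : sqnorm (s - s') = sqnorm (s' - s) by rewrite -sqnormN opprB.
have e2 : dotv (s - s') (x - y) = - dotv s (y - x) - dotv s' (x - y).
  rewrite dotvBl -(opprB y x) dotvNr; lra.
rewrite e2 e1; rewrite e1 in h2; move: h1 h2.
set N := sqnorm (s' - s) => h1 h2.
have k0 : 0 < (2 * L)^-1 by rewrite invr_gt0 mulr_gt0.
have : 2 * (2 * L)^-1 * N <= - dotv s (y - x) - dotv s' (x - y).
  lra.
have -> : 2 * (2 * L)^-1 = L^-1 by rewrite invfM mulrA mulfV // mul1r.
move=> h; have := ler_wpM2l (ltW L0) h; rewrite mulrA mulfV ?gt_eqF // mul1r.
done.
Qed.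
End Smooth.
Section Cont.
Context {R : realType} {d : nat}.

Lemma sqnorm_continuous (a : 'rV[R]_d) : continuous (fun v : 'rV[R]_d => sqnorm (v - a)).
Proof.
move=> v; rewrite /sqnorm /dotv.
elim: (index_enum _) => [|k s IH]; rewrite /continuous_at.
  have -> : (fun w : 'rV[R]_d => \sum_(k <- [::]) (w - a) 0 k * (w - a) 0 k) = fun=> 0.
    by apply/funext=> w; rewrite big_nil.
  by rewrite big_nil; exact: cst_continuous.
have -> : (fun w : 'rV[R]_d => \sum_(k0 <- k :: s) (w - a) 0 k0 * (w - a) 0 k0) =
   (fun w => (w - a) 0 k * (w - a) 0 k + \sum_(k0 <- s) (w - a) 0 k0 * (w - a) 0 k0).
  by apply/funext=> w; rewrite big_cons.
rewrite big_cons.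
apply: cvgD; [exact: nbhs_filter| idtac | exact: IH].
have hc : {for v, continuous (fun w : 'rV[R]_d => (w - a) 0 k)}.
  have -> : (fun w : 'rV[R]_d => (w - a) 0 k) = (fun w => w 0 k - a 0 k).
    by apply/funext=> w; rewrite !mxE.
  rewrite /continuous_at.
  have h1 : (fun w : 'rV[R]_d => w 0 k) @ v --> v 0 k := @coord_continuous R 1 d 0 k v.
  have h2 : (fun _ : 'rV[R]_d => a 0 k) @ v --> a 0 k by apply: cst_continuous.
  exact: cvgB h1 h2.
exact: (cvgM hc hc).
Qed.

End Cont.
Section Exist.
Context {R : realType} {d : nat}.

Lemma sublevel_closed (h : 'rV[R]_d -> \bar R) (k c : R) (a : 'rV[R]_d) :
  closed_fun h -> (forall x, h x != -oo%E) ->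
  closed [set v | (h v + (k * sqnorm (v - a))%:E <= c%:E)%E].
Proof.
move=> hcl hno.
have -> : [set v | (h v + (k * sqnorm (v - a))%:E <= c%:E)%E] =
   (fun v => (v, c - k * sqnorm (v - a))) @^-1` [set p : 'rV[R]_d * R | (h p.1 <= p.2%:E)%E].
  apply/seteqP; split=> v /=; have := hno v; case: (h v) => [r| |] //= _.
  - by rewrite !lee_fin lerBrDr.
  - by rewrite !lee_fin lerBrDr.
have hc : continuous (fun v : 'rV[R]_d => (v, c - k * sqnorm (v - a))).
  move=> v.
  have h1 : (fun x : 'rV[R]_d => x) @ v --> v by apply: cvg_id.
  have h3 : (fun x : 'rV[R]_d => sqnorm (x - a)) @ v --> sqnorm (v - a) by apply: sqnorm_continuous.
  have h2 : (fun x : 'rV[R]_d => c - k * sqnorm (x - a)) @ v --> c - k * sqnorm (v - a).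
    apply: cvgB; [exact: nbhs_filter | exact: cst_continuous | ].
    apply: cvgM; [exact: nbhs_filter | exact: cst_continuous | exact: h3].
  exact: (@cvg_pair _ _ _ _ _ _ (nbhs_filter v) (nbhs_filter v) (nbhs_filter _) _ _ h1 h2).
exact: (proj1 (continuous_closedP _) hc _ hcl).
Qed.

End Exist.
Section Exist2.
Context {R : realType} {d : nat}.

Lemma rV_norm_le (v : 'rV[R]_d) (M : R) : 0 <= M -> (forall i, `|v 0 i| <= M) -> `|v| <= M.
Proof.
move=> M0 H; rewrite [leLHS]/Num.norm /= mx_normrE; apply: bigmax_le => // -[i j] _ /=.
by rewrite (ord1 i); apply: H.
Qed.

Lemma sublevel_bounded (h : 'rV[R]_d -> \bar R) (k c b : R) (s a : 'rV[R]_d) :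
  0 < k -> (forall u, ((b + dotv s u)%:E <= h u)%E) ->
  bounded_set [set v | (h v + (k * sqnorm (v - a))%:E <= c%:E)%E].
Proof.
move=> k0 hb.
set B2 := 2 / k * (c - b - dotv s a + sqnorm s / (2 * k)).
have key : forall v, (h v + (k * sqnorm (v - a))%:E <= c%:E)%E -> sqnorm (v - a) <= B2.
  move=> v hv.
  have : ((b + dotv s v)%:E + (k * sqnorm (v - a))%:E <= c%:E)%E.
    apply: le_trans hv; apply: leeD => //.
  rewrite -EFinD lee_fin => h1.
  set e := v - a.
  have ed : dotv s v = dotv s a + dotv s e by rewrite /e dotvBr; lra.
  rewrite ed in h1.
  have h2 := sqnorm_ge0 (k *: e + s).
  rewrite sqnormD sqnormZ dotvZl (dotvC e s) in h2.
  rewrite -/e in h1.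
  have N0 := sqnorm_ge0 e; have S0 := sqnorm_ge0 s.
  rewrite /B2.
  have -> : 2 / k * (c - b - dotv s a + sqnorm s / (2 * k)) =
     (2 * k * (c - b - dotv s a) + sqnorm s) / (k * k).
    by field; apply: lt0r_neq0.
  rewrite ler_pdivlMr ?mulr_gt0 //.
  have h3 := ler_wpM2l (ltW k0) h1.
  rewrite expr2 in h2.
  move: h3 h2; set X := dotv s e; set Y := dotv s a; set N := sqnorm e; set S := sqnorm s.
  move=> h3 h2.
  have -> : N * (k * k) = k * k * N by rewrite mulrC.
  rewrite !mulrDr in h3.
  have e1 : k * (k * N) = k * k * N by rewrite mulrA.
  rewrite e1 in h3.
  lra.
exists (2 + sqnorm a + B2); split; first by rewrite num_real.
move=> M hM v /key hv /=.
have M0 : 0 <= M.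
  apply: le_trans (ltW hM); have := sqnorm_ge0 a; have := le_trans (sqnorm_ge0 (v - a)) hv; lra.
apply: rV_norm_le => // i.
have ev : v = a + (v - a) by rewrite addrC subrK.
rewrite ev mxE; apply: le_trans (ler_normD _ _) _.
have := coord_le a i; have := coord_le (v - a) i; lra.
Qed.

End Exist2.
Section Exist3.
Context {R : realType} {d : nat}.

Lemma prox_exists (h : 'rV[R]_d -> \bar R) (eta : R) (a : 'rV[R]_d) :
  0 < eta ->
  (forall c : R, closed [set v | (h v + ((2 * eta)^-1 * sqnorm (v - a))%:E <= c%:E)%E]) ->
  (forall x, h x != -oo%E) ->
  (exists x0 r0, h x0 = r0%:E) ->
  (exists s b, forall u, ((b + dotv s u)%:E <= h u)%E) ->
  exists u, forall v : 'rV[R]_d,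
    (h u + ((2 * eta)^-1 * sqnorm (u - a))%:E
       <= h v + ((2 * eta)^-1 * sqnorm (v - a))%:E)%E.
Proof.
move=> eta0 hcl hno [x0 [r0 hx0]] [s [b hb]].
set k := (2 * eta)^-1.
have k0 : 0 < k by rewrite invr_gt0 mulr_gt0.
pose psi v := (h v + (k * sqnorm (v - a))%:E)%E.
set c0 := r0 + k * sqnorm (x0 - a).
have px0 : psi x0 = c0%:E by rewrite /psi hx0.
pose A := [set v | (psi v <= c0%:E)%E].
have Ac : compact A.
  apply: bounded_closed_compact.
  - exact: (sublevel_bounded _ _ _ _ _ _ k0 hb).
  - exact: hcl.
move: Ac; rewrite compact_In0 => /(_ R [set c | exists v, (psi v <= c%:E)%E]
   (fun c => A `&` [set v | (psi v <= c%:E)%E])) [].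
- exists (fun c => [set v | (psi v <= c%:E)%E]) => // c _.
  exact: hcl.
- move=> D' sD'.
  have claim : forall l : seq R, (forall c, c \in l -> exists v, (psi v <= c%:E)%E) ->
      exists v, (psi v <= c0%:E)%E /\ forall c, c \in l -> (psi v <= c%:E)%E.
    elim=> [|c l IH] Hl.
      by exists x0; split => //; rewrite px0.
    have [v' [hv'0 hv']] : exists v, (psi v <= c0%:E)%E /\ forall c, c \in l -> (psi v <= c%:E)%E.
      by apply: IH => c' hc'; apply: Hl; rewrite inE hc' orbT.
    have [vc hvc] := Hl c (mem_head _ _).
    have [le1|le1] := leP (psi vc) (psi v').
    + exists vc; split; first exact: le_trans le1 hv'0.
      move=> c'; rewrite inE => /orP [/eqP -> //|hc'].
      exact: le_trans le1 (hv' _ hc').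
    + exists v'; split => // c'; rewrite inE => /orP [/eqP ->|hc'].
        exact: le_trans (ltW le1) hvc.
      exact: hv'.
  have [v [hv0 hv]] := claim (finmap.enum_fset D') (fun c hc => set_mem (sD' c hc)).
  by exists v => c /= hc; split; [exact: hv0 | exact: hv].
move=> p hp; exists p => v.
rewrite -/k; have := hno v; case hv: (h v) => [r| |] // _.
- have hr : [set c | exists v, (psi v <= c%:E)%E] (r + k * sqnorm (v - a)).
    by exists v; rewrite /psi hv.
  by have [_] := hp _ hr; rewrite /psi /= EFinD.
- by rewrite addye ?leey.
Qed.


Lemma prox_min (h : 'rV[R]_d -> \bar R) (eta : R) (a : 'rV[R]_d) :
  0 < eta ->
  (forall c : R, closed [set v | (h v + ((2 * eta)^-1 * sqnorm (v - a))%:E <= c%:E)%E]) ->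
  (forall x, h x != -oo%E) ->
  (exists x0 r0, h x0 = r0%:E) ->
  (exists s b, forall u, ((b + dotv s u)%:E <= h u)%E) ->
  forall v : 'rV[R]_d,
    (h (prox h eta a) + ((2 * eta)^-1 * sqnorm (prox h eta a - a))%:E
       <= h v + ((2 * eta)^-1 * sqnorm (v - a))%:E)%E.
Proof.
move=> e0 hcl hno hx0 hb; rewrite /prox.
exact: (getPex (prox_exists h eta a e0 hcl hno hx0 hb)).
Qed.

End Exist3.
Section ProxSub.
Context {R : realType} {d : nat}.

Lemma lim_small (A B C : R) : 0 <= C -> (forall l, 0 < l -> l <= 1 -> A <= B + l * C) -> A <= B.
Proof.
move=> C0 H; apply/ler_addgt0Pr => e e0.
have [Ce|Cn0] := eqVneq C 0.
  by have := H 1 ltr01 (lexx _); rewrite Ce mulr0 addr0 => h; apply: le_trans h _; rewrite lerDl ltW.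
have Cp : 0 < C by rewrite lt_neqAle eq_sym Cn0 C0.
set l := Num.min 1 (e / C).
have l0 : 0 < l by rewrite lt_min ltr01 divr_gt0.
have l1 : l <= 1 by rewrite ge_min lexx.
apply: le_trans (H l l0 l1) _; rewrite lerD2l.
have : l <= e / C by rewrite ge_min lexx orbT.
by rewrite ler_pdivlMr.
Qed.

Lemma prox_subgrad (h : 'rV[R]_d -> \bar R) (eta : R) (a u : 'rV[R]_d) (hu : R) :
  0 < eta -> convex_efun h -> (forall x, h x != -oo%E) ->
  (forall v : 'rV[R]_d,
    (h u + ((2 * eta)^-1 * sqnorm (u - a))%:E
       <= h v + ((2 * eta)^-1 * sqnorm (v - a))%:E)%E) ->
  h u = hu%:E ->
  forall v, ((hu + dotv (eta^-1 *: (a - u)) (v - u))%:E <= h v)%E.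
Proof.
move=> eta0 hcv hno hmin hu_eq v.
have := hno v; case hv: (h v) => [r| |] // _; last by rewrite leey.
rewrite lee_fin.
set k := (2 * eta)^-1.
have k0 : 0 < k by rewrite invr_gt0 mulr_gt0.
set w := v - u.
have e1 : dotv (eta^-1 *: (a - u)) w = - (2 * k) * dotv (u - a) w.
  rewrite dotvZl -opprB dotvNl /k invfM mulrA mulfV ?mul1r ?mulNr //.
  by rewrite mulrN.
rewrite e1.
apply: (lim_small _ _ (k * sqnorm w)); first by apply: mulr_ge0; [exact: ltW | exact: sqnorm_ge0].
move=> l l0 l1.
set xl := l *: v + (1 - l) *: u.
have hconv := hcv v u l.
rewrite hv hu_eq ltey /= in hconv.
have hcx : (h xl <= (l * r + (1 - l) * hu)%:E)%E.
  rewrite EFinD !EFinM; apply: hconv; do ?[done | exact: ltey | by rewrite (ltW l0) l1].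
have hm := hmin xl.
rewrite hu_eq in hm.
have h3 : ((hu + k * sqnorm (u - a))%:E <= (l * r + (1 - l) * hu + k * sqnorm (xl - a))%:E)%E.
  rewrite EFinD; apply: le_trans hm _; rewrite [X in (_ <= X)%E]EFinD.
  exact: leeD hcx (lexx _).
rewrite lee_fin in h3.
have exl : xl - a = (u - a) + l *: w.
  by apply/rowP => i; rewrite /xl /w !mxE; ring.
rewrite exl (sqnormD (u - a)) sqnormZ dotvZr in h3.
set P := dotv (u - a) w in h3 *.
set N0 := sqnorm (u - a) in h3 *.
set Nw := sqnorm w in h3 *.
have hN : 0 <= Nw by apply: sqnorm_ge0.
have : l * (hu - 2 * k * P) <= l * (r + l * (k * Nw)).
  move: h3; rewrite !mulrDr !mulrBl; lra.
rewrite ler_pM2l // mulNr.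
by [].
Qed.

End ProxSub.
Section ProxIneq.
Context {R : realType} {d : nat}.

Lemma proxR_ineq (Rf : 'rV[R]_d -> \bar R) (eta : R) (w yb xs rs gf ystar : 'rV[R]_d) :
  0 < eta -> closed_fun Rf -> convex_efun Rf -> (forall x, Rf x != -oo%E) ->
  (exists x0 r0, Rf x0 = r0%:E) -> esubgrad Rf xs rs -> (exists rxs, Rf xs = rxs%:E) ->
  gf + ystar + rs = 0 ->
  sqnorm (prox Rf eta (w - eta *: yb) - xs)
    <= dotv ((w - (xs - eta *: gf)) - eta *: (yb - ystar)) (prox Rf eta (w - eta *: yb) - xs).
Proof.
move=> e0 hcl hcv hno [x0 [r0 hx0]] hsg [rxs hxs] hopt.
set a := w - eta *: yb.
set z := prox Rf eta a.
have hb : exists s b, forall u, ((b + dotv s u)%:E <= Rf u)%E.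
  exists rs, (rxs - dotv rs xs) => u.
  apply: le_trans (hsg u); rewrite hxs -EFinD lee_fin dotvBr; lra.
have hmin := prox_min Rf eta a e0 (fun c => sublevel_closed Rf _ c a hcl hno) hno
   (ex_intro _ x0 (ex_intro _ r0 hx0)) hb.
rewrite -/z in hmin.
have : exists rz, Rf z = rz%:E.
  have := hmin x0; have := hno z; rewrite hx0.
  case: (Rf z) => [rz| |] //; by exists rz.
move=> [rz hz].
have hsz := prox_subgrad Rf eta a z rz e0 hcv hno hmin hz xs.
rewrite hxs lee_fin in hsz.
have hsx := hsg z; rewrite hxs hz -EFinD lee_fin in hsx.
have ers : rs = - (gf + ystar) by rewrite (addr0_eq hopt).
set D := (w - (xs - eta *: gf)) - eta *: (yb - ystar).
have ev : eta *: (eta^-1 *: (a - z)) - eta *: rs = D - (z - xs).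
  rewrite ers /D /a; apply/rowP => k; rewrite !mxE; field; exact: lt0r_neq0.
have key : 0 <= dotv (D - (z - xs)) (z - xs).
  rewrite -ev dotvBl !dotvZl mulrA mulfV ?lt0r_neq0 // mul1r.
  rewrite dotvZl -(opprB z xs) dotvNr in hsz.
  set X := dotv (a - z) (z - xs) in hsz *.
  set Y := dotv rs (z - xs) in hsx *.
  have h1 : Y <= eta^-1 * X by move: hsz hsx; rewrite mulrN; lra.
  have := ler_wpM2l (ltW e0) h1; rewrite mulrA mulfV ?lt0r_neq0 // mul1r; lra.
by move: key; rewrite dotvBl /sqnorm; lra.
Qed.

End ProxIneq.
Section ProxG.
Context {R : realType} {d : nat}.

Lemma gsub_closed (g : 'rV[R]_d -> R) (k c : R) (a : 'rV[R]_d) :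
  (forall x, differentiable g x) ->
  closed [set v | ((g v)%:E + (k * sqnorm (v - a))%:E <= c%:E)%E].
Proof.
move=> hd.
have -> : [set v | ((g v)%:E + (k * sqnorm (v - a))%:E <= c%:E)%E] =
   (fun v => g v + k * sqnorm (v - a)) @^-1` [set x : R | x <= c].
  by apply/seteqP; split => v /=; rewrite -EFinD lee_fin.
apply: (proj1 (continuous_closedP _)); last exact: closed_le.
move=> v.
have h1 : g x @[x --> v] --> g v := differentiable_continuous (hd v).
have h3 : (fun x : 'rV[R]_d => sqnorm (x - a)) @ v --> sqnorm (v - a) by apply: sqnorm_continuous.
have h2 : (fun x : 'rV[R]_d => k * sqnorm (x - a)) @ v --> k * sqnorm (v - a).
  apply: cvgM; [exact: nbhs_filter | exact: cst_continuous | exact: h3].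
apply: cvgD; [exact: nbhs_filter | exact: h1 | exact: h2].
Qed.

Lemma convex_efunE (g : 'rV[R]_d -> R) : convex_fun g -> convex_efun (fun u => (g u)%:E).
Proof.
move=> hc x y l hl _ _; rewrite -!EFinM -EFinD lee_fin; exact: hc.
Qed.

Lemma proxg_ineq (g : 'rV[R]_d -> R) (eta Lg : R) (z yj xs ysj : 'rV[R]_d) :
  0 < eta -> 0 < Lg -> convex_fun g -> smooth Lg g -> subgrad g xs ysj ->
  sqnorm (prox (fun u => (g u)%:E) eta (z + eta *: yj) - xs)
   + (eta ^+ 2 + 2 * eta / Lg) *
     sqnorm (yj + eta^-1 *: (z - prox (fun u => (g u)%:E) eta (z + eta *: yj)) - ysj)
  <= sqnorm (z - xs + eta *: (yj - ysj)).
Proof.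
move=> e0 L0 hcv hsm hsg.
set a := z + eta *: yj.
set x' := prox (fun u => (g u)%:E) eta a.
set yj' := yj + eta^-1 *: (z - x').
have hb : exists s b, forall u, ((b + dotv s u)%:E <= (fun u => (g u)%:E) u)%E.
  exists ysj, (g xs - dotv ysj xs) => u /=.
  rewrite lee_fin; apply: le_trans (hsg u); rewrite dotvBr; lra.
have hmin := prox_min (fun u => (g u)%:E) eta a e0
   (fun c => gsub_closed g _ c a (proj1 hsm)) (fun x => erefl _)
   (ex_intro _ xs (ex_intro _ (g xs) erefl)) hb.
rewrite -/x' in hmin.
have hsx' := prox_subgrad _ eta a x' (g x') e0 (convex_efunE g hcv) (fun x => erefl _) hmin erefl.
have hsub : subgrad g x' yj'.
  move=> u; have := hsx' u; rewrite lee_fin.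
  have -> : eta^-1 *: (a - x') = yj' by rewrite /yj' /a; apply/rowP => k; rewrite !mxE; field; exact: lt0r_neq0.
  done.
have hco := cocoercive L0 hsm hsub hsg.
have ee : z - xs + eta *: (yj - ysj) = (x' - xs) + eta *: (yj' - ysj).
  by rewrite /yj'; apply/rowP => k; rewrite !mxE; field; exact: lt0r_neq0.
rewrite ee (sqnormD (x' - xs)) sqnormZ dotvZr.
rewrite -/x' -/yj'.
set N := sqnorm (yj' - ysj) in hco *.
set P := dotv (yj' - ysj) (x' - xs) in hco.
have eP : dotv (x' - xs) (yj' - ysj) = P by rewrite /P dotvC.
rewrite eP.
have : 2 * eta / Lg * N <= 2 * eta * P.
  have c0 : 0 <= 2 * eta / Lg by apply: divr_ge0; [apply: mulr_ge0 => //; exact: ltW | exact: ltW].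
  have := ler_wpM2l c0 hco.
  have -> : 2 * eta / Lg * (Lg * P) = 2 * eta * P by field; exact: lt0r_neq0.
  done.
lra.
Qed.

End ProxG.
Section SDMproof.
Context {R : realType} {d n m : nat} (fs : 'I_n -> 'rV[R]_d -> R)
  (gs : 'I_m -> 'rV[R]_d -> R) (Rf : 'rV[R]_d -> \bar R) (eta Lg : R)
  (est : estimator) (xs : 'rV[R]_d) (ys : 'I_m -> 'rV[R]_d).

Local Notation p := (fun _ : 'I_m => m%:R^-1 : R).
Local Notation step := (sdm_step fs gs Rf eta p est).

Definition Sy (s : sdm_state R d n m) := \sum_(k < m) sqnorm (st_y s k - ys k).
Definition gam := eta ^+ 2 + 2 * eta / Lg.
Definition Phi s := sqnorm (st_x s - xs) + gam * Sy s.
Definition inv (s : sdm_state R d n m) := st_ybar s = m%:R^-1 *: \sum_(k < m) st_y s k.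

Lemma etaj_eq (j : 'I_m) : eta / (m%:R * p j) = eta.
Proof.
have m0 : m%:R != 0 :> R by rewrite pnatr_eq0; case: (m) j => [[]|].
by rewrite mulfV // divr1.
Qed.

Lemma inv_step t s ij : inv s -> inv (step t s ij).
Proof.
rewrite /inv /sdm_step /= => ->.
case: ij => i j /=.
rewrite (etaj_eq j).
rewrite (bigD1 j) //= [in RHS](bigD1 j) //= eqxx.
rewrite [X in _ = _ *: (_ + X)](eq_bigr (fun k => st_y s k)); last by move=> k /negbTE ->.
rewrite -scalerDr; congr (_ *: _).
by apply/rowP => k; rewrite !mxE; ring.

Qed.


Lemma inv_run t0 s h : inv s -> inv (sdm_run fs gs Rf eta p est t0 s h).
Proof. by elim: h t0 s => [|ij h IH] t0 s hs //=; apply: IH; exact: inv_step. Qed.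

Lemma run_rcons t0 s h ij :
  sdm_run fs gs Rf eta p est t0 s (rcons h ij) = step (t0 + size h) (sdm_run fs gs Rf eta p est t0 s h) ij.
Proof.
elim: h t0 s => [|ij' h IH] t0 s /=; first by rewrite addn0.
by rewrite IH addSnnS.
Qed.

Lemma Phi_step t s i j :
  0 < eta -> 0 < Lg -> convex_fun (gs j) -> smooth Lg (gs j) -> subgrad (gs j) xs (ys j) ->
  Phi (step t s (i, j)) <=
    sqnorm (prox Rf eta (st_x s - eta *: sdm_v fs s i - eta *: st_ybar s) - xs)
    + 2 * eta * dotv (prox Rf eta (st_x s - eta *: sdm_v fs s i - eta *: st_ybar s) - xs) (st_y s j - ys j)
    + (eta ^+ 2 - gam) * sqnorm (st_y s j - ys j) + gam * Sy s.
Proof.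
move=> e0 L0 hcv hsm hsg.
set z := prox Rf eta _.
rewrite /Phi /Sy /sdm_step /= (etaj_eq j) -/z.
have hg := proxg_ineq (gs j) eta Lg z (st_y s j) xs (ys j) e0 L0 hcv hsm hsg.
have eg : eta ^+ 2 + 2 * eta / Lg = gam by [].
rewrite eg (sqnormD (z - xs)) sqnormZ dotvZr in hg.
rewrite (bigD1 j) //= eqxx [X in _ <= _ + _ * X](bigD1 j) //=.
rewrite (eq_bigr (fun k => sqnorm (st_y s k - ys k))); last by move=> k /negbTE ->.
move: hg; set A := sqnorm (_ - ys j); set Rest := \sum_(i0 < m | i0 != j) _.
move=> hg.
lra.
Qed.


Lemma dotv_sumr (u : 'rV[R]_d) (v : 'I_m -> 'rV[R]_d) :
  dotv u (\sum_(j < m) v j) = \sum_(j < m) dotv u (v j).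
Proof.
have h0 : dotv u 0 = 0 by rewrite dotvC dotv0l.
exact: (big_morph (dotv u) (fun x y => dotvDr x y u) h0).
Qed.

Lemma step_i t s i (rs gf : 'rV[R]_d) :
  0 < eta -> 0 < Lg -> (0 < m)%N ->
  closed_fun Rf -> convex_efun Rf -> (forall x, Rf x != -oo%E) ->
  (exists x0 r0, Rf x0 = r0%:E) -> esubgrad Rf xs rs -> (exists rxs, Rf xs = rxs%:E) ->
  gf + m%:R^-1 *: \sum_(j < m) ys j + rs = 0 ->
  (forall j, convex_fun (gs j) /\ smooth Lg (gs j)) ->
  (forall j, subgrad (gs j) xs (ys j)) ->
  inv s ->
  \sum_(j < m) m%:R^-1 * Phi (step t s (i, j)) <=
    sqnorm ((st_x s - eta *: sdm_v fs s i) - (xs - eta *: gf))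
    + (gam - 2 * eta / (Lg * m%:R)) * Sy s.
Proof.
move=> e0 L0 m0 hcl hcv hno hx0 hsg hxs hopt hg hys hinv.
have mR : m%:R != 0 :> R by rewrite pnatr_eq0 -lt0n.
set w := st_x s - eta *: sdm_v fs s i.
set ystar := m%:R^-1 *: \sum_(j < m) ys j.
have hR := proxR_ineq Rf eta w (st_ybar s) xs rs gf ystar e0 hcl hcv hno hx0 hsg hxs hopt.
set z := prox Rf eta (w - eta *: st_ybar s) in hR.
have h1 : \sum_(j < m) m%:R^-1 * Phi (step t s (i, j)) <=
   \sum_(j < m) m%:R^-1 * (sqnorm (z - xs) + 2 * eta * dotv (z - xs) (st_y s j - ys j)
      + (eta ^+ 2 - gam) * sqnorm (st_y s j - ys j) + gam * Sy s).
  apply: ler_sum => j _; apply: ler_wpM2l; first by rewrite invr_ge0 ler0n.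
  have [hc hs] := hg j.
  exact: (Phi_step t s i j e0 L0 hc hs (hys j)).
apply: le_trans h1 _.
rewrite -mulr_sumr !big_split /= -!mulr_sumr.
rewrite !sumr_const card_ord -/(Sy s).
rewrite -dotv_sumr sumrB.
have eyb : \sum_(j < m) st_y s j - \sum_(j < m) ys j = m%:R *: (st_ybar s - ystar).
  rewrite hinv /ystar -scalerBr scalerA mulfV // scale1r.
  done.
rewrite eyb dotvZr.
have ey := young (w - (xs - eta *: gf)) (z - xs).
rewrite dotvBl dotvZl in hR.
rewrite -/(sqnorm (w - (xs - eta *: gf))) in ey.
set Z := sqnorm (z - xs) in hR ey *.
set Q := dotv (st_ybar s - ystar) (z - xs) in hR.
have eQ : dotv (z - xs) (st_ybar s - ystar) = Q by rewrite /Q dotvC.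
rewrite eQ.
set W := dotv (w - (xs - eta *: gf)) (z - xs) in hR ey.
have eg : eta ^+ 2 - gam = - (2 * eta / Lg) by rewrite /gam; timeout 20 ring.
rewrite eg.
set S := Sy s.
set N := sqnorm (w - (xs - eta *: gf)) in ey *.
rewrite -[Z *+ m]mulr_natl -[S *+ m]mulr_natl.
have -> : m%:R^-1 * (m%:R * Z + 2 * eta * (m%:R * Q) + - (2 * eta / Lg) * S + gam * (m%:R * S))
   = Z + 2 * eta * Q - 2 * eta / (Lg * m%:R) * S + gam * S.
  by timeout 30 field; rewrite mR; apply/andP; split => //; exact: lt0r_neq0.
have : Z + 2 * eta * Q <= N by lra.
lra.
Qed.


Lemma step_all t s (rs gf : 'rV[R]_d) :
  0 < eta -> 0 < Lg -> (0 < m)%N -> (0 < n)%N ->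
  closed_fun Rf -> convex_efun Rf -> (forall x, Rf x != -oo%E) ->
  (exists x0 r0, Rf x0 = r0%:E) -> esubgrad Rf xs rs -> (exists rxs, Rf xs = rxs%:E) ->
  gf + m%:R^-1 *: \sum_(j < m) ys j + rs = 0 ->
  (forall j, convex_fun (gs j) /\ smooth Lg (gs j)) ->
  (forall j, subgrad (gs j) xs (ys j)) ->
  inv s ->
  \sum_(ij : 'I_n * 'I_m) (n%:R^-1 * p ij.2) * Phi (step t s ij) <=
    \sum_(i < n) n%:R^-1 * sqnorm ((st_x s - eta *: sdm_v fs s i) - (xs - eta *: gf))
    + (gam - 2 * eta / (Lg * m%:R)) * Sy s.
Proof.
move=> e0 L0 m0 n0 hcl hcv hno hx0 hsg hxs hopt hg hys hinv.
have nR : n%:R != 0 :> R by rewrite pnatr_eq0 -lt0n.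
rewrite -(pair_bigA _ (fun (i : 'I_n) (j : 'I_m) => (n%:R^-1 * p j) * Phi (step t s (i, j)))) /=.
have -> : (gam - 2 * eta / (Lg * m%:R)) * Sy s =
   \sum_(i < n) n%:R^-1 * ((gam - 2 * eta / (Lg * m%:R)) * Sy s).
  by rewrite -mulr_sumr sumr_const card_ord -(mulr_natl ((gam - 2 * eta / (Lg * m%:R)) * Sy s) n) [RHS]mulrA mulVf // mul1r.
rewrite -big_split /=; apply: ler_sum => i _.
rewrite -mulrDr.
have -> : \sum_(j < m) n%:R^-1 * m%:R^-1 * Phi (step t s (i, j)) =
   n%:R^-1 * \sum_(j < m) m%:R^-1 * Phi (step t s (i, j)).
  by rewrite mulr_sumr; apply: eq_bigr => j _; rewrite mulrA.
apply: ler_wpM2l; first by rewrite invr_ge0 ler0n.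
exact: (step_i t s i rs gf e0 L0 m0 hcl hcv hno hx0 hsg hxs hopt hg hys hinv).
Qed.

End SDMproof.
Section Expect.
Context {R : realType} {n m : nat} (p : 'I_m -> R).
Local Notation T := ('I_n * 'I_m)%type.

Lemma expect0 (F : seq T -> R) : sdm_expect p 0 F = F [::].
Proof.
rewrite /sdm_expect (big_pred1 [tuple]) /=; last by move=> h; apply/esym/eqP; exact: tuple0.
by rewrite big_nil mul1r.
Qed.

Lemma expect_cons t (F : seq T -> R) : sdm_expect p t.+1 F =
  \sum_(x : T) (n%:R^-1 * p x.2) * sdm_expect p t (fun h => F (x :: h)).
Proof.
rewrite /sdm_expect (reindex (fun xu : T * t.-tuple T => cons_tuple xu.1 xu.2)) /=; last first.
  exists (fun v : t.+1.-tuple T => (thead v, [tuple of behead v])).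
    by move=> [x u] _ /=; congr pair; apply: val_inj.
  by move=> v _ /=; rewrite [RHS]tuple_eta; apply: val_inj.
rewrite -(pair_bigA _ (fun (x : T) (u : t.-tuple T) => (\prod_(ij <- x :: u) (n%:R^-1 * p ij.2)) * F (x :: u))) /=; apply: eq_bigr => x _.
rewrite mulr_sumr; apply: eq_bigr => u _.
by rewrite big_cons mulrA.
Qed.

Lemma expect_rcons t (F : seq T -> R) : sdm_expect p t.+1 F =
  sdm_expect p t (fun h => \sum_(ij : T) (n%:R^-1 * p ij.2) * F (rcons h ij)).
Proof.
elim: t F => [|t IH] F.
  by rewrite expect_cons expect0; apply: eq_bigr => x _; rewrite expect0.
rewrite expect_cons [RHS]expect_cons; apply: eq_bigr => x _.
by rewrite IH.
Qed.

Lemma expect_le t (F G : seq T -> R) : (forall ij, 0 <= p ij) -> (forall h, F h <= G h) ->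
  sdm_expect p t F <= sdm_expect p t G.
Proof.
move=> p0 FG; apply: ler_sum => h _; apply: ler_wpM2l => //.
apply: prodr_ge0 => ij _; apply: mulr_ge0 => //; by rewrite invr_ge0 ler0n.
Qed.

Lemma expect_ge0 t (F : seq T -> R) : (forall ij, 0 <= p ij) -> (forall h, 0 <= F h) -> 0 <= sdm_expect p t F.
Proof.
move=> p0 F0; apply: sumr_ge0 => h _; apply: mulr_ge0 => //.
apply: prodr_ge0 => ij _; apply: mulr_ge0 => //; by rewrite invr_ge0 ler0n.
Qed.

Lemma expect_lin t (F G : seq T -> R) c :
  sdm_expect p t (fun h => F h + c * G h) = sdm_expect p t F + c * sdm_expect p t G.
Proof.
rewrite /sdm_expect mulr_sumr -big_split; apply: eq_bigr => h _ /=.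
by rewrite mulrDr mulrCA.
Qed.

End Expect.
Section Rate.
Context {R : realType}.

Lemma rate_bounds (omega L Lg mu : R) (n m : nat) :
  0 < omega -> 0 < L -> 0 < Lg -> 0 < mu -> (0 < n)%N -> (0 < m)%N ->
  let C := 1 + 5 / omega + 2 / Num.sqrt omega in
  let A := n%:R + m%:R + L / mu + Num.sqrt (m%:R * Lg / mu) in
  let eta := Num.min (5 * L)^-1 (Num.sqrt (omega * mu * m%:R * Lg))^-1 in
  [/\ 0 < eta, 0 < C * A, 1 <= C * A * (omega * eta * mu), 1 <= C * A * n%:R^-1
    & gam eta Lg <= C * A * (2 * eta / (Lg * m%:R))].
Proof.
move=> w0 L0 Lg0 mu0 n0 m0 C A eta.
have nR : 0 < n%:R :> R by rewrite ltr0n.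
have mR : 0 < m%:R :> R by rewrite ltr0n.
set s := Num.sqrt omega.
have s0 : 0 < s by rewrite sqrtr_gt0.
have ew : omega = s * s by rewrite -expr2 sqr_sqrtr // ltW.
set q := Num.sqrt (m%:R * Lg / mu).
have q0 : 0 < q by rewrite sqrtr_gt0 divr_gt0 // mulr_gt0.
have eq : q * q * mu = m%:R * Lg.
  by rewrite -expr2 sqr_sqrtr ?divfK ?lt0r_neq0 // ltW // divr_gt0 // mulr_gt0.
set b := Num.sqrt (omega * mu * m%:R * Lg).
have eb : b = s * mu * q.
  rewrite /b; have -> : omega * mu * m%:R * Lg = (s * mu * q) ^+ 2.
    have s2 : s ^+ 2 = omega by rewrite /s sqr_sqrtr // ltW.
    have q2 : q ^+ 2 = m%:R * Lg / mu by rewrite /q sqr_sqrtr // ltW // divr_gt0 // mulr_gt0.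
    rewrite !exprMn s2 q2; field; exact: lt0r_neq0.
  by rewrite sqrtr_sqr gtr0_norm // !mulr_gt0.
have b0 : 0 < b by rewrite eb !mulr_gt0.
have e0 : 0 < eta by rewrite lt_min !invr_gt0 b0 mulr_gt0.
have e1 : 1 <= eta * (5 * L + b).
  have : (5 * L + b)^-1 <= eta.
    rewrite le_min; apply/andP; split; rewrite lef_pV2 ?posrE ?addr_gt0 ?mulr_gt0 //.
      by rewrite lerDl ltW.
    by rewrite lerDr mulr_ge0 // ltW.
  have L5 : 0 < 5 * L + b by rewrite addr_gt0 // mulr_gt0.
  move=> h; have := ler_wpM2r (ltW L5) h.
  by rewrite mulVf // lt0r_neq0 // addr_gt0 // mulr_gt0.
have e2 : eta * b <= 1.
  have : eta <= b^-1 by rewrite ge_min lexx orbT.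
  move=> h; have := ler_wpM2r (ltW b0) h; by rewrite mulVf // lt0r_neq0.
have Lm0 : 0 <= L / mu by apply: divr_ge0; exact: ltW.
have eA : A = n%:R + m%:R + L / mu + q by [].
have An : n%:R <= A by rewrite eA; lra.
have Am : m%:R <= A by rewrite eA; lra.
have Aq : q <= A by rewrite eA; lra.
have AL : L <= A * mu.
  have -> : A * mu = (n%:R + m%:R + q) * mu + L by rewrite eA; field; exact: lt0r_neq0.
  have : 0 <= (n%:R + m%:R + q) * mu by rewrite mulr_ge0 // ltW // !addr_gt0.
  lra.
have A0 : 0 < A by apply: lt_le_trans nR An.
have eC : C = 1 + 5 / (s * s) + 2 / s by rewrite /C -/s -ew.
have C1 : 1 <= C.
  rewrite eC -addrA lerDl; apply: addr_ge0; apply: divr_ge0 => //; apply: ltW => //.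
  exact: mulr_gt0.
have CA0 : 0 < C * A by apply: mulr_gt0 => //; apply: lt_le_trans ltr01 C1.
have CAA : A <= C * A by rewrite ler_peMl // ltW.
split => //.
-
  have H1 : C * A * (omega * eta * mu) = eta * (A * mu * (s * s) + 5 * (A * mu) + 2 * (A * s * mu)).
    rewrite eC ew; field; apply: lt0r_neq0 => //.
  rewrite H1; apply: le_trans e1 _; apply: ler_wpM2l; first exact: ltW.
  rewrite eb.
  have h1 : 0 <= A * mu * (s * s) by rewrite !mulr_ge0 // ltW.
  have h2 := ler_wpM2l (ltW (mulr_gt0 s0 mu0)) Aq.
  lra.
- rewrite -ler_pdivrMr ?invr_gt0 // invrK mul1r.
  exact: le_trans An CAA.
-
  rewrite /gam.
  have H2 : C * A * (2 * eta / (Lg * m%:R)) = eta * (2 * C * A) / (Lg * m%:R).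
    by rewrite !mulrA; ring.
  rewrite H2 ler_pdivlMr ?mulr_gt0 //.
  have H3 : (eta ^+ 2 + 2 * eta / Lg) * (Lg * m%:R) = eta * (eta * Lg * m%:R + 2 * m%:R).
    by field; apply: lt0r_neq0.
  rewrite H3; apply: ler_wpM2l; first exact: ltW.
  have h4 : eta * Lg * m%:R * s <= q.
    have : eta * b * q <= q by rewrite ger_pMl.
    rewrite eb.
    have -> : eta * (s * mu * q) * q = eta * Lg * m%:R * s.
      have e5 : eta * (s * mu * q) * q = eta * s * (q * q * mu) by ring.
      by rewrite e5 eq; ring.
    done.
  have h5 : 2 * C * A = 2 * A + 10 * A / (s * s) + 4 * A / s by rewrite eC; field; apply: lt0r_neq0.
  rewrite h5.
  have h6 : eta * Lg * m%:R <= 4 * A / s.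
    rewrite ler_pdivlMr //; apply: le_trans h4 _.
    nra.
  have h7 : 0 <= 10 * A / (s * s) by rewrite divr_ge0 // ?mulr_ge0 // ltW.
  lra.
Qed.

End Rate.

Lemma rate_bounds2 {R : realType} (omega L Lg mu : R) (n m : nat) (C A eta : R) :
  0 < omega -> 0 < L -> 0 < Lg -> 0 < mu -> (0 < n)%N -> (0 < m)%N ->
  C = 1 + 5 / omega + 2 / Num.sqrt omega ->
  A = n%:R + m%:R + L / mu + Num.sqrt (m%:R * Lg / mu) ->
  eta = Num.min (5 * L)^-1 (Num.sqrt (omega * mu * m%:R * Lg))^-1 ->
  [/\ 0 < eta, 0 < C * A, 1 <= C * A * (omega * eta * mu), 1 <= C * A * n%:R^-1
    & gam eta Lg <= C * A * (2 * eta / (Lg * m%:R))].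
Proof. move=> ? ? ? ? ? ? -> -> ->; exact: rate_bounds. Qed.
Local Close Scope classical_set_scope.
Theorem corollary3 (R : realType) (omega : R) (Homega : 0 < omega) :
  exists C : R, 0 < C /\
  forall (d n m : nat) (fs : 'I_n -> 'rV[R]_d -> R) (gs : 'I_m -> 'rV[R]_d -> R)
         (Rf : 'rV[R]_d -> \bar R) (L Lg mu : R)
         (xs : 'rV[R]_d) (est : estimator)
         (x0 : 'rV[R]_d) (y0 : 'I_m -> 'rV[R]_d) (u0 : 'I_n -> 'rV[R]_d),
    (0 < n)%N -> (0 < m)%N ->
    0 < L -> 0 < Lg -> 0 < mu ->
    let f := fun x => n%:R^-1 * \sum_(i < n) fs i x in
    let p := fun _ : 'I_m => m%:R^-1 in
    let F := fun x => ((f x + m%:R^-1 * \sum_(j < m) gs j x)%:E + Rf x)%E in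
    (forall i, convex_fun (fs i) /\ smooth L (fs i)) ->
    strongly_convex mu f ->
    proper_fun Rf -> closed_fun Rf -> convex_efun Rf ->
    (forall j, convex_fun (gs j) /\ smooth Lg (gs j)) ->
    (* standing optimality assumption *)
    (forall x, (F xs <= F x)%E) ->
    (exists (ys : 'I_m -> 'rV[R]_d) (rs : 'rV[R]_d),
        (forall j, subgrad (gs j) xs (ys j)) /\ esubgrad Rf xs rs /\
        grad f xs + m%:R^-1 *: \sum_(j < m) ys j + rs = 0) ->
    (* SVRG: positive period, common initial reference point *)
    (forall T, est = SVRG T -> (0 < T)%N /\ forall k k', u0 k = u0 k') ->
    let s0 := SDMState x0 y0 (m%:R^-1 *: \sum_(j < m) y0 j) u0 in
    let eta0 := (5 * L)^-1 in
    let rho := n%:R^-1 in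
    (* part (b) of the gradient-estimator condition *)
    (forall eta, 0 < eta <= eta0 ->
       exists M : nat -> R, (forall t, 0 <= M t) /\
       forall t,
         sdm_Ew fs gs Rf eta p est s0 xs t + M t.+1
         <= (1 - omega * eta * mu) * sdm_Ex fs gs Rf eta p est s0 xs t
            + (1 - rho) * M t) ->
    let eta_best := (Num.sqrt (omega * mu * m%:R * Lg))^-1 in
    let eta := Num.min eta0 eta_best in
    exists K : R, 0 < K /\
    forall (eps : R) (t : nat), 0 < eps ->
      C * (n%:R + m%:R + L / mu + Num.sqrt (m%:R * Lg / mu)) * ln (K / eps)
        <= t%:R ->
      sdm_Ex fs gs Rf eta p est s0 xs t <= eps.
Proof.
set C := 1 + 5 / omega + 2 / Num.sqrt omega.
have C0 : 0 < C.
  have h1 : 0 <= 5 / omega by apply: divr_ge0 => //; exact: ltW.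
  have h2 : 0 <= 2 / Num.sqrt omega by apply: divr_ge0 => //; exact: sqrtr_ge0.
  rewrite /C; lra.
exists C; split => //.
move=> d n m fs gs Rf L Lg mu xs est x0 y0 u0 n0 m0 L0 Lg0 mu0 f p F hfs hsc hprop hcl hcvx hgs
  hopt [ys [rs [hys [hrs heq]]]] hsvrg s0 eta0 rho hb eta_best eta.
set A' := n%:R + m%:R + L / mu + Num.sqrt (m%:R * Lg / mu).
have [e0 CA0 ra rb rc] := rate_bounds2 omega L Lg mu n m C A' eta Homega L0 Lg0 mu0 n0 m0
   erefl erefl erefl.
have eta_le : eta <= eta0 by rewrite ge_min lexx.
have heta : 0 < eta <= eta0 by rewrite e0 eta_le.
have [M [M0 hM]] := hb eta heta.
have hno : forall x, Rf x != -oo%E by case: hprop.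
have [x1 [r1 hx1]] : exists x r, Rf x = r%:E.
  case: hprop => _ [x hx]; move: (hno x) hx; case hx': (Rf x) => [r| |] // _ _.
  by exists x, r.
have hxs : exists rxs, Rf xs = rxs%:E.
  have := hrs x1; rewrite hx1; move: (hno xs); case: (Rf xs) => [r| |] //.
  by move=> _ _; exists r.
have p0 : forall j, 0 <= p j by move=> j; rewrite /p invr_ge0 ler0n.
set th := (C * A')^-1.
have th0 : 0 < th by rewrite invr_gt0.
have thle : forall x, 1 <= C * A' * x -> th <= x.
  move=> x hx; have := ler_wpM2l (ltW th0) hx.
  by rewrite mulr1 mulrA mulVf ?mul1r // lt0r_neq0.
pose Y t := sdm_expect p t (fun h => Sy ys (sdm_run fs gs Rf eta p est 0 s0 h)).
pose Ax t := sdm_Ex fs gs Rf eta p est s0 xs t.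
pose Psi t := Ax t + M t + gam eta Lg * Y t.
have Ax0 : forall t, 0 <= Ax t.
  by move=> t; apply: expect_ge0 => // h; exact: sqnorm_ge0.
have Y0 : forall t, 0 <= Y t.
  by move=> t; apply: expect_ge0 => // h; apply: sumr_ge0 => k _; exact: sqnorm_ge0.
have gam0 : 0 <= gam eta Lg.
  rewrite /gam; apply: addr_ge0; first exact: sqr_ge0.
  by apply: divr_ge0; [apply: mulr_ge0 => //; exact: ltW | exact: ltW].
have step1 : forall t, Ax t.+1 + gam eta Lg * Y t.+1 <=
    sdm_Ew fs gs Rf eta p est s0 xs t + (gam eta Lg - 2 * eta / (Lg * m%:R)) * Y t.
  move=> t; rewrite /Ax /Y /sdm_Ex -expect_lin expect_rcons /sdm_Ew -expect_lin.
  apply: expect_le => // h.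
  under eq_bigr => ij _ do rewrite run_rcons add0n.
  have hinv : inv (sdm_run fs gs Rf eta p est 0 s0 h) by apply: inv_run.
  exact: (step_all fs gs Rf eta Lg est xs ys (size h) _ rs (grad f xs) e0 Lg0 m0 n0 hcl hcvx hno
     (ex_intro _ x1 (ex_intro _ r1 hx1)) hrs hxs heq hgs hys hinv).
have tha := thle _ ra.
have thb := thle _ rb.
have thc : th * gam eta Lg <= 2 * eta / (Lg * m%:R).
  have := ler_wpM2l (ltW th0) rc.
  have -> : th * (C * A' * (2 * eta / (Lg * m%:R))) = 2 * eta / (Lg * m%:R).
    rewrite /th mulrA mulVf ?mul1r //; exact: lt0r_neq0.
  done.
have rec : forall t, Psi t.+1 <= (1 - th) * Psi t.
  move=> t; have h1 := step1 t; have h2 := hM t.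
  rewrite -/(Ax t) in h2.
  have k1 := ler_wpM2r (Ax0 t) tha.
  have k2 := ler_wpM2r (M0 t) thb.
  have k3 := ler_wpM2r (Y0 t) thc.
  rewrite /Psi /rho in h2 *; lra.
have Psi0 : forall t, 0 <= Psi t.
  move=> t; rewrite /Psi; apply: addr_ge0; first exact: addr_ge0.
  exact: mulr_ge0.
have th1 : th <= 1.
  by apply: le_trans thb _; rewrite invf_le1 ?ltr0n // ler1n.
have bound : forall t, Psi t <= expR (- (th * t%:R)) * Psi 0.
  elim=> [|t IH]; first by rewrite mulr0 oppr0 expR0 mul1r.
  apply: le_trans (rec t) _.
  have := ler_wpM2l (_ : 0 <= 1 - th) IH.
  move=> /(_ ltac:(by rewrite subr_ge0)) h; apply: le_trans h _.
  rewrite mulrA; apply: ler_wpM2r; first exact: Psi0.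
  have -> : - (th * t.+1%:R) = - th + - (th * t%:R) by rewrite -natr1 mulrDr mulr1; lra.
  rewrite expRD; apply: ler_wpM2r; first exact: ltW (expR_gt0 _).
  by have := expR_ge1Dx (- th); lra.
exists (Psi 0 + 1); split; first by have := Psi0 0; lra.
move=> eps t eps0 ht.
set K := Psi 0 + 1.
have K0 : 0 < K by rewrite /K; have := Psi0 0; lra.
have hx : Ax t <= Psi t by rewrite /Psi; have := M0 t; have := mulr_ge0 gam0 (Y0 t); lra.
apply: le_trans hx _; apply: le_trans (bound t) _.
have hl : ln (K / eps) <= th * t%:R.
  have := ler_wpM2l (ltW th0) ht; rewrite /th mulrA mulVf ?mul1r //; exact: lt0r_neq0.
have he : expR (- (th * t%:R)) <= eps / K.
  apply: le_trans (_ : expR (- ln (K / eps)) <= _).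
    by rewrite ler_expR lerN2.
  rewrite expRN lnK ?posrE ?divr_gt0 // invf_div.
  done.
have hP : Psi 0 <= K by rewrite /K; lra.
apply: le_trans (ler_wpM2l (ltW (expR_gt0 _)) hP) _.
apply: le_trans (ler_wpM2r (ltW K0) he) _.
by rewrite divfK // lt0r_neq0.
Qed.
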